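(* Let $\mathcal T''=(e,e)+\Delta(\mathfrak g_{-1}\oplus\mathfrak g_0)$, where $\Delta(V)=\{(x,x):x\in V\}$. Then: (1) $\mathcal T''$ is a Poisson submanifold of $(\mathfrak g\times\mathfrak g,\{\cdot,\cdot\}_{\mathcal R})$; (2) the map $\varphi:\mathbb T\to\mathcal T''$, $\varphi(x)=(x,x)$, from the Toda phase space $\mathbb T=e+\mathfrak g_{-1}\oplus\mathfrak g_0$ equipped with the Poisson $R$-bracket $\{\cdot,\cdot\}_R$, is a Poisson isomorphism onto $(\mathcal T'',\{\cdot,\cdot\}_{\mathcal R})$, and for all $1\le i\le\ell$, $0\le k\le m_i+1$ and $x\in\mathbb T$ one has $F_{k,i}(\varphi(x))=\binom{m_i+1}{k}P_i(x)$; thus $\varphi$ pulls back the restriction of $\mathcal F$ to $\mathcal T''$ to (constant multiples of) the Toda family $(P_1,\dots,P_\ell)$.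
   Context: Let $\mathfrak g$ be a complex simple Lie algebra of rank $\ell$ with Killing form $\langle\cdot,\cdot\rangle$. Fix a Cartan subalgebra $\mathfrak h$, simple roots $\alpha_1,\dots,\alpha_\ell$ of the root system $\Phi$, and nonzero root vectors $e_i$ for $\alpha_i$. Set $\mathfrak g_0=\mathfrak h$ and, for $k\neq0$, let $\mathfrak g_k$ be the span of root vectors $e_\alpha$ with $\alpha=\sum_ia_i\alpha_i\in\Phi$, $\sum_ia_i=k$. Write $\mathfrak g_+=\sum_{i\ge0}\mathfrak g_i$, $\mathfrak g_-=\sum_{i<0}\mathfrak g_i$, $P_\pm$ the projections onto $\mathfrak g_\pm$, $R=P_+-P_-$, $e=\sum_{i=1}^\ell e_i$. The Poisson $R$-bracket on $\mathfrak g$ is $\{F,G\}_R(x)=\tfrac12\langle x,[R\nabla_xF,\nabla_xG]+[\nabla_xF,R\nabla_xG]\rangle$ (gradients w.r.t. the Killing form); $\mathbb T=e+\mathfrak g_{-1}\oplus\mathfrak g_0$ is a Poisson submanifold of it. On $\mathfrak g\times\mathfrak g$ use the componentwise Lie bracket and the form $\langle(x_1,y_1),(x_2,y_2)\rangle_2=\langle x_1,x_2\rangle-\langle y_1,y_2\rangle$; $\mathcal R(x,y)=(R(x-y)+y,R(x-y)+x)$ and $\{F,G\}_{\mathcal R}(x,y)=\tfrac12\langle(x,y),[\mathcal R\nabla F,\nabla G]+[\nabla F,\mathcal R\nabla G]\rangle_2$ (gradients w.r.t. $\langle\cdot,\cdot\rangle_2$). Let $P_1,\dots,P_\ell$ be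 homogeneous algebraically independent generators of the $\mathrm{Ad}$-invariant polynomials on $\mathfrak g$, of degrees $m_1+1,\dots,m_\ell+1$, and define $F_{k,i}$ by $P_i(\lambda x-y)=\sum_{k=0}^{m_i+1}(-1)^{m_i+1-k}\lambda^kF_{k,i}(x,y)$ for all $\lambda$; $\mathcal F=(F_{k,i})$. *)

(* Defs.v *)
From HB Require Import structures.
From mathcomp Require Import all_boot all_order all_algebra.
From mathcomp Require Import reals.
From mathcomp Require Export complex.
From mathcomp Require Export mpoly.
Set Implicit Arguments. Unset Strict Implicit. Unset Printing Implicit Defensive.
Import GRing.Theory.
Local Open Scope ring_scope.

(* Throughout: F a field, g = 'rV[F]_n (coordinates w.r.t. a fixed basis),
   br : g -> g -> g the Lie bracket, h a subspace given by the row space of a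
   matrix H, functionals on g are column vectors a : 'cV_n, a(y) = (y *m a) 0 0. *)

Definition lie_bracket (F : fieldType) (n : nat)
  (br : 'rV[F]_n -> 'rV[F]_n -> 'rV[F]_n) : Prop :=
  [/\ (forall (a : F) x y z, br (a *: x + y) z = a *: br x z + br y z),
      (forall (a : F) x y z, br z (a *: x + y) = a *: br z x + br z y),
      (forall x, br x x = 0) &
      (forall x y z, br x (br y z) + br y (br z x) + br z (br x y) = 0)].

Definition lie_ideal (F : fieldType) (n : nat)
  (br : 'rV[F]_n -> 'rV[F]_n -> 'rV[F]_n) (I : 'M[F]_n) : Prop :=
  forall x y : 'rV[F]_n, (x <= I)%MS -> (br y x <= I)%MS.

Definition lie_simple (F : fieldType) (n : nat)
  (br : 'rV[F]_n -> 'rV[F]_n -> 'rV[F]_n) : Prop :=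
  (exists x y, br x y != 0) /\
  forall I : 'M[F]_n, lie_ideal br I -> \rank I = 0%N \/ \rank I = n.

Definition ad_mx (F : fieldType) (n : nat)
  (br : 'rV[F]_n -> 'rV[F]_n -> 'rV[F]_n) (x : 'rV[F]_n) : 'M[F]_n :=
  lin1_mx (br x).

Definition killing (F : fieldType) (n : nat)
  (br : 'rV[F]_n -> 'rV[F]_n -> 'rV[F]_n) (x y : 'rV[F]_n) : F :=
  \tr (ad_mx br x *m ad_mx br y).

Definition lie_subalgebra (F : fieldType) (n : nat)
  (br : 'rV[F]_n -> 'rV[F]_n -> 'rV[F]_n) (H : 'M[F]_n) : Prop :=
  forall x y : 'rV[F]_n, (x <= H)%MS -> (y <= H)%MS -> (br x y <= H)%MS.

Fixpoint lbr (F : fieldType) (n : nat)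
  (br : 'rV[F]_n -> 'rV[F]_n -> 'rV[F]_n) (x : 'rV[F]_n) (s : seq 'rV[F]_n)
  : 'rV[F]_n :=
  match s with [::] => x | y :: s' => br y (lbr br x s') end.

Definition lie_nilpotent_sub (F : fieldType) (n : nat)
  (br : 'rV[F]_n -> 'rV[F]_n -> 'rV[F]_n) (H : 'M[F]_n) : Prop :=
  exists N : nat, forall (x : 'rV[F]_n) (s : seq 'rV[F]_n),
    (x <= H)%MS -> all (fun y => (y <= H)%MS) s -> size s = N ->
    lbr br x s = 0.

Definition self_normalizing (F : fieldType) (n : nat)
  (br : 'rV[F]_n -> 'rV[F]_n -> 'rV[F]_n) (H : 'M[F]_n) : Prop :=
  forall x : 'rV[F]_n, (forall y, (y <= H)%MS -> (br x y <= H)%MS) -> (x <= H)%MS.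

Definition cartan_subalgebra (F : fieldType) (n : nat)
  (br : 'rV[F]_n -> 'rV[F]_n -> 'rV[F]_n) (H : 'M[F]_n) : Prop :=
  [/\ lie_subalgebra br H, lie_nilpotent_sub br H & self_normalizing br H].

Definition fv (F : fieldType) (n : nat) (a : 'cV[F]_n) (y : 'rV[F]_n) : F :=
  (y *m a) 0 0.

(* x lies in the weight space of the functional a|_h (x may be 0) *)
Definition rootvec (F : fieldType) (n : nat)
  (br : 'rV[F]_n -> 'rV[F]_n -> 'rV[F]_n) (H : 'M[F]_n) (a : 'cV[F]_n)
  (x : 'rV[F]_n) : Prop :=
  forall y, (y <= H)%MS -> br y x = fv a y *: x.

Definition is_root (F : fieldType) (n : nat)
  (br : 'rV[F]_n -> 'rV[F]_n -> 'rV[F]_n) (H : 'M[F]_n) (a : 'cV[F]_n) : Prop :=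
  (exists2 y, (y <= H)%MS & fv a y != 0) /\
  (exists2 x, x != 0 & rootvec br H a x).

Definition int_comb (F : fieldType) (n l : nat) (alpha : 'I_l -> 'cV[F]_n)
  (c : 'I_l -> int) : 'cV[F]_n := \sum_(i < l) (c i)%:~R *: alpha i.

Definition simple_roots (F : fieldType) (n l : nat)
  (br : 'rV[F]_n -> 'rV[F]_n -> 'rV[F]_n) (H : 'M[F]_n)
  (alpha : 'I_l -> 'cV[F]_n) : Prop :=
  [/\ (forall i, is_root br H (alpha i)),
      (forall c : 'I_l -> F,
         (forall y, (y <= H)%MS -> fv (\sum_(i < l) c i *: alpha i) y = 0) ->
         forall i, c i = 0) &
      (forall a, is_root br H a ->
         exists c : 'I_l -> int,
           ((forall i, 0 <= c i) \/ (forall i, c i <= 0)) /\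
           (forall y, (y <= H)%MS -> fv a y = fv (int_comb alpha c) y))].

Definition height_rootvec (F : fieldType) (n l : nat)
  (br : 'rV[F]_n -> 'rV[F]_n -> 'rV[F]_n) (H : 'M[F]_n)
  (alpha : 'I_l -> 'cV[F]_n) (k : int) (x : 'rV[F]_n) : Prop :=
  exists c : 'I_l -> int,
    \sum_(i < l) c i = k /\ rootvec br H (int_comb alpha c) x.

Definition in_span (F : fieldType) (n : nat) (P : 'rV[F]_n -> Prop)
  (x : 'rV[F]_n) : Prop :=
  exists m (xs : 'I_m -> 'rV[F]_n), (forall j, P (xs j)) /\ x = \sum_(j < m) xs j.

Definition grade (F : fieldType) (n l : nat)
  (br : 'rV[F]_n -> 'rV[F]_n -> 'rV[F]_n) (H : 'M[F]_n)
  (alpha : 'I_l -> 'cV[F]_n) (k : int) (x : 'rV[F]_n) : Prop :=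
  (k = 0 /\ (x <= H)%MS) \/ (k <> 0 /\ in_span (height_rootvec br H alpha k) x).

Definition grade_sum (F : fieldType) (n l : nat)
  (br : 'rV[F]_n -> 'rV[F]_n -> 'rV[F]_n) (H : 'M[F]_n)
  (alpha : 'I_l -> 'cV[F]_n) (S : int -> bool) (x : 'rV[F]_n) : Prop :=
  in_span (fun y => exists2 k, S k & grade br H alpha k y) x.

(* Pp is the projection P_+ onto g_+ = sum_{k>=0} g_k along g_- = sum_{k<0} g_k
   (acting on row vectors: P_+ x = x *m Pp) *)
Definition is_proj_plus (F : fieldType) (n l : nat)
  (br : 'rV[F]_n -> 'rV[F]_n -> 'rV[F]_n) (H : 'M[F]_n)
  (alpha : 'I_l -> 'cV[F]_n) (Pp : 'M[F]_n) : Prop :=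
  forall x : 'rV[F]_n,
    grade_sum br H alpha (fun k => 0 <= k) (x *m Pp) /\
    grade_sum br H alpha (fun k => k < 0) (x - x *m Pp).

Definition Rop (F : fieldType) (n : nat) (Pp : 'M[F]_n) (x : 'rV[F]_n) : 'rV[F]_n :=
  x *m Pp - (x - x *m Pp).

Definition evp (F : fieldType) (n : nat) (p : {mpoly F[n]}) (x : 'rV[F]_n) : F :=
  p.@[fun j => x 0 j].

Definition dif (F : fieldType) (n : nat) (p : {mpoly F[n]}) (x : 'rV[F]_n)
  : 'rV[F]_n := \row_j evp (mderiv j p) x.

Definition gram (F : fieldType) (n : nat) (b : 'rV[F]_n -> 'rV[F]_n -> F)
  : 'M[F]_n := \matrix_(i, j) b (delta_mx 0 i) (delta_mx 0 j).

(* gradient w.r.t. the (symmetric, nondegenerate) form b: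
   the vector g with b g v = dp_x v for all v *)
Definition grad (F : fieldType) (n : nat) (b : 'rV[F]_n -> 'rV[F]_n -> F)
  (p : {mpoly F[n]}) (x : 'rV[F]_n) : 'rV[F]_n :=
  dif p x *m invmx (gram b).

Definition R_bracket (F : fieldType) (n : nat)
  (br : 'rV[F]_n -> 'rV[F]_n -> 'rV[F]_n) (Pp : 'M[F]_n)
  (P Q : {mpoly F[n]}) (x : 'rV[F]_n) : F :=
  let gP := grad (killing br) P x in
  let gQ := grad (killing br) Q x in
  2%:R^-1 * killing br x (br (Rop Pp gP) gQ + br gP (Rop Pp gQ)).

(* g x g modelled as 'rV_(n+n), (x,y) = row_mx x y *)
Definition br2 (F : fieldType) (n : nat)
  (br : 'rV[F]_n -> 'rV[F]_n -> 'rV[F]_n) (u v : 'rV[F]_(n + n)) : 'rV[F]_(n + n) :=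
  row_mx (br (lsubmx u) (lsubmx v)) (br (rsubmx u) (rsubmx v)).

Definition form2 (F : fieldType) (n : nat)
  (br : 'rV[F]_n -> 'rV[F]_n -> 'rV[F]_n) (u v : 'rV[F]_(n + n)) : F :=
  killing br (lsubmx u) (lsubmx v) - killing br (rsubmx u) (rsubmx v).

Definition calR (F : fieldType) (n : nat) (Pp : 'M[F]_n) (u : 'rV[F]_(n + n))
  : 'rV[F]_(n + n) :=
  let x := lsubmx u in let y := rsubmx u in
  row_mx (Rop Pp (x - y) + y) (Rop Pp (x - y) + x).

Definition calR_bracket (F : fieldType) (n : nat)
  (br : 'rV[F]_n -> 'rV[F]_n -> 'rV[F]_n) (Pp : 'M[F]_n)
  (P Q : {mpoly F[n + n]}) (u : 'rV[F]_(n + n)) : F :=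
  let gP := grad (form2 br) P u in
  let gQ := grad (form2 br) Q u in
  2%:R^-1 * form2 br u (br2 br (calR Pp gP) gQ + br2 br gP (calR Pp gQ)).

Definition ham (F : fieldType) (N : nat)
  (B : {mpoly F[N]} -> {mpoly F[N]} -> 'rV[F]_N -> F)
  (Q : {mpoly F[N]}) (u : 'rV[F]_N) : 'rV[F]_N :=
  \row_j B 'X_j Q u.

(* the affine subspace p + W (W a linear subspace, given by its membership
   predicate) is a Poisson submanifold: all Hamiltonian vector fields are
   tangent to it at each of its points *)
Definition poisson_submanifold (F : fieldType) (N : nat)
  (B : {mpoly F[N]} -> {mpoly F[N]} -> 'rV[F]_N -> F)
  (p : 'rV[F]_N) (W : 'rV[F]_N -> Prop) : Prop :=
  forall (Q : {mpoly F[N]}) (u : 'rV[F]_N), W (u - p) -> W (ham B Q u).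

Definition diag_index (n : nat) (j : 'I_(n + n)) : 'I_n :=
  match split j with inl a => a | inr b => b end.

Definition pull_diag (F : fieldType) (n : nat) (Q : {mpoly F[n + n]}) : {mpoly F[n]} :=
  comp_mpoly [tuple 'X_(diag_index j) | j < n + n] Q.

(* Ad-invariance, in its infinitesimal (ad-) form: dp_x([y,x]) = 0 *)
Definition ad_invariant (F : fieldType) (n : nat)
  (br : 'rV[F]_n -> 'rV[F]_n -> 'rV[F]_n) (p : {mpoly F[n]}) : Prop :=
  forall x y : 'rV[F]_n, \sum_(j < n) dif p x 0 j * br y x 0 j = 0.

Definition invariant_generators (F : fieldType) (n l : nat)
  (br : 'rV[F]_n -> 'rV[F]_n -> 'rV[F]_n)
  (P : 'I_l -> {mpoly F[n]}) (m : 'I_l -> nat) : Prop :=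
  [/\ (forall i, ad_invariant br (P i)),
      (forall i, P i \is (m i).+1.-homog),
      (forall Q : {mpoly F[l]}, comp_mpoly [tuple P i | i < l] Q = 0 -> Q = 0) &
      (forall p, ad_invariant br p ->
         exists Q : {mpoly F[l]}, p = comp_mpoly [tuple P i | i < l] Q)].

(* Main.v *)
Require Import Defs.
From HB Require Import structures.
From mathcomp Require Import all_boot all_order all_algebra.
From mathcomp Require Import reals boolp.
From mathcomp Require Import complex mpoly.
From mathcomp Require Import ring zify.
Set Implicit Arguments. Unset Strict Implicit. Unset Printing Implicit Defensive.
Import GRing.Theory Num.Theory.
Local Open Scope ring_scope.

Section LinF.
Variables (F : fieldType) (m k : nat) (f : 'rV[F]_m -> 'rV[F]_k).
Hypothesis hf : forall a x y, f (a *: x + y) = a *: f x + f y.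
Lemma lf0 : f 0 = 0.
Proof. have h := hf 1 0 0; rewrite !scale1r addr0 in h.
by apply: (@addrI _ (f 0)); rewrite addr0 -h. Qed.
Lemma lfD x y : f (x + y) = f x + f y.
Proof. by have := hf 1 x y; rewrite !scale1r. Qed.
Lemma lfZ a x : f (a *: x) = a *: f x.
Proof. by have := hf a x 0; rewrite !addr0 lf0 addr0. Qed.
Lemma lfN x : f (- x) = - f x.
Proof. by rewrite -scaleN1r lfZ scaleN1r. Qed.
Lemma lfB x y : f (x - y) = f x - f y.
Proof. by rewrite lfD lfN. Qed.
Lemma lf_sum (I : Type) (r : seq I) (P : pred I) (G : I -> 'rV[F]_m) :
  f (\sum_(i <- r | P i) G i) = \sum_(i <- r | P i) f (G i).
Proof. exact: (big_morph f lfD lf0). Qed.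
Lemma lin1_mxE u : u *m lin1_mx f = f u.
Proof.
rewrite {2}(row_sum_delta u) lf_sum; apply/rowP=> j.
rewrite !mxE summxE; apply: eq_bigr => i _; rewrite lfZ !mxE; done.
Qed.
End LinF.

Section Bil.
Variables (F : fieldType) (n : nat) (b : 'rV[F]_n -> 'rV[F]_n -> F).
Hypothesis hb : forall a x y z, b (a *: x + y) z = a * b x z + b y z.
Hypothesis hs : forall x y, b x y = b y x.
Lemma bl0 z : b 0 z = 0.
Proof. have h := hb 1 0 0 z; rewrite !scale1r addr0 mul1r in h.
by apply: (@addrI _ (b 0 z)); rewrite addr0 -h. Qed.
Lemma blD x y z : b (x + y) z = b x z + b y z.
Proof. by have := hb 1 x y z; rewrite !scale1r mul1r. Qed.
Lemma blZ a x z : b (a *: x) z = a * b x z.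
Proof. by have := hb a x 0 z; rewrite !addr0 bl0 addr0. Qed.
Lemma blN x z : b (- x) z = - b x z.
Proof. by rewrite -scaleN1r blZ mulN1r. Qed.
Lemma brD x y z : b z (x + y) = b z x + b z y.
Proof. by rewrite !(hs z) blD. Qed.
Lemma brZ a x z : b z (a *: x) = a * b z x.
Proof. by rewrite !(hs z) blZ. Qed.
Lemma brN x z : b z (- x) = - b z x.
Proof. by rewrite !(hs z) blN. Qed.
Lemma br0 z : b z 0 = 0.
Proof. by rewrite hs bl0. Qed.
Lemma bl_sum (I : Type) (r : seq I) (P : pred I) (G : I -> 'rV[F]_n) z :
  b (\sum_(i <- r | P i) G i) z = \sum_(i <- r | P i) b (G i) z.
Proof. exact: (big_morph (fun x => b x z) (fun x y => blD x y z) (bl0 z)). Qed.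
Lemma br_sum (I : Type) (r : seq I) (P : pred I) (G : I -> 'rV[F]_n) z :
  b z (\sum_(i <- r | P i) G i) = \sum_(i <- r | P i) b z (G i).
Proof. rewrite hs bl_sum; apply: eq_bigr => i _; exact: hs. Qed.
Lemma bil_gram u v : b u v = (u *m gram b *m v^T) 0 0.
Proof.
rewrite {1}(row_sum_delta u) bl_sum mxE.
under [RHS]eq_bigr => j _ do rewrite mxE !mxE mulr_suml.
rewrite exchange_big /=; apply: eq_bigr => i _.
rewrite blZ hs {1}(row_sum_delta v) bl_sum mulr_sumr; apply: eq_bigr => j _.
by rewrite blZ mxE hs; ring.
Qed.
Lemma gram_tr : (gram b)^T = gram b.
Proof. by apply/matrixP => i j; rewrite !mxE hs. Qed.
End Bil.

Section Lie.
Variables (F : fieldType) (n : nat) (br : 'rV[F]_n -> 'rV[F]_n -> 'rV[F]_n).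
Hypothesis hL : lie_bracket br.

Lemma hbr_r x : forall a y z, br x (a *: y + z) = a *: br x y + br x z.
Proof. by case: hL => _ h _ _ a y z; apply: h. Qed.
Lemma hbr_l z : forall a x y, (fun x => br x z) (a *: x + y) = a *: br x z + br y z.
Proof. by case: hL => h _ _ _ a x y; apply: h. Qed.
Lemma brA x y : br x y = - br y x.
Proof.
case: hL => _ _ h0 _.
have := h0 (x + y); rewrite (lfD (hbr_l _)) !(lfD (hbr_r _)) !h0 add0r addr0.
by move/eqP; rewrite addr_eq0 => /eqP.
Qed.
Lemma br0l z : br 0 z = 0. Proof. exact: (lf0 (hbr_l z)). Qed.
Lemma br0r z : br z 0 = 0. Proof. exact: (lf0 (hbr_r z)). Qed.
Lemma brDl x y z : br (x + y) z = br x z + br y z. Proof. exact: (lfD (hbr_l z)). Qed.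
Lemma brDr x y z : br z (x + y) = br z x + br z y. Proof. exact: (lfD (hbr_r z)). Qed.
Lemma brZl a x z : br (a *: x) z = a *: br x z. Proof. exact: (lfZ (hbr_l z)). Qed.
Lemma brZr a x z : br z (a *: x) = a *: br z x. Proof. exact: (lfZ (hbr_r z)). Qed.
Lemma brNl x z : br (- x) z = - br x z. Proof. exact: (lfN (hbr_l z)). Qed.
Lemma brNr x z : br z (- x) = - br z x. Proof. exact: (lfN (hbr_r z)). Qed.
Lemma brBl x y z : br (x - y) z = br x z - br y z. Proof. exact: (lfB (hbr_l z)). Qed.
Lemma brBr x y z : br z (x - y) = br z x - br z y. Proof. exact: (lfB (hbr_r z)). Qed.
Lemma br_suml (I : Type) (r : seq I) (P : pred I) (G : I -> 'rV[F]_n) z :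
  br (\sum_(i <- r | P i) G i) z = \sum_(i <- r | P i) br (G i) z.
Proof. exact: (lf_sum (hbr_l z)). Qed.
Lemma br_sumr (I : Type) (r : seq I) (P : pred I) (G : I -> 'rV[F]_n) z :
  br z (\sum_(i <- r | P i) G i) = \sum_(i <- r | P i) br z (G i).
Proof. exact: (lf_sum (hbr_r z)). Qed.

Lemma ad_mxE x v : v *m ad_mx br x = br x v.
Proof. exact: (lin1_mxE (hbr_r x)). Qed.
Lemma ad_mx_lin a x y : ad_mx br (a *: x + y) = a *: ad_mx br x + ad_mx br y.
Proof. apply/matrixP => i j; rewrite /ad_mx !mxE.
by case: hL => h _ _ _; rewrite h !mxE. Qed.
Lemma jacobi' a b d : br (br a b) d = br a (br b d) - br b (br a d).
Proof.
case: hL => _ _ _ hJ; have H := hJ a b d.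
have e1 : br b (br d a) = - br b (br a d) by rewrite (brA d a) brNr.
have e2 : br d (br a b) = - br (br a b) d by apply: brA.
rewrite e1 e2 in H.
by rewrite -[LHS]add0r -H addrNK.
Qed.
Lemma ad_br a b : ad_mx br (br a b) = ad_mx br b *m ad_mx br a - ad_mx br a *m ad_mx br b.
Proof.
apply/row_matrixP => i; rewrite !rowE mulmxBr !mulmxA !ad_mxE; exact: jacobi'.
Qed.
Lemma killing_lin a x y z : killing br (a *: x + y) z = a * killing br x z + killing br y z.
Proof. by rewrite /killing ad_mx_lin mulmxDl -scalemxAl mxtraceD mxtraceZ. Qed.
Lemma killing_sym x y : killing br x y = killing br y x.
Proof. exact: mxtrace_mulC. Qed.
Lemma killing_inv a b c : killing br (br a b) c = killing br a (br b c).
Proof.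
rewrite /killing !ad_br mulmxBl mulmxBr !raddfB /=.
congr (_ - _); last by rewrite mulmxA.
by rewrite -mulmxA mxtrace_mulC mulmxA.
Qed.
Definition kl := killing_lin.
Lemma kbl_sum (I : Type) (r : seq I) (P : pred I) (G : I -> 'rV[F]_n) z :
  killing br (\sum_(i <- r | P i) G i) z = \sum_(i <- r | P i) killing br (G i) z.
Proof. exact: (bl_sum kl). Qed.
Lemma kbr_sum (I : Type) (r : seq I) (P : pred I) (G : I -> 'rV[F]_n) z :
  killing br z (\sum_(i <- r | P i) G i) = \sum_(i <- r | P i) killing br z (G i).
Proof. exact: (br_sum kl killing_sym). Qed.
Lemma kgram u v : killing br u v = (u *m gram (killing br) *m v^T) 0 0.
Proof. exact: (bil_gram kl killing_sym). Qed.
Lemma gram_mulE u j : (u *m gram (killing br)) 0 j = killing br u (delta_mx 0 j).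
Proof.
rewrite {2}(row_sum_delta u) kbl_sum mxE; apply: eq_bigr => i _.
by rewrite (blZ kl) mxE.
Qed.

Lemma killing_dich : lie_simple br ->
  gram (killing br) \in unitmx \/ gram (killing br) = 0.
Proof.
move=> [_ hS]; set K := gram (killing br).
have hI : lie_ideal br (kermx K).
  move=> x y /sub_kermxP hx; apply/sub_kermxP/rowP => j.
  rewrite gram_mulE mxE brA (blN kl) killing_inv kgram hx !mul0mx mxE oppr0 //.
case: (hS _ hI); rewrite mxrank_ker => h.
  left; rewrite -row_free_unit /row_free; have := rank_leq_row K.
  move: h; lia.
right; apply/eqP; rewrite -mxrank_eq0; have := rank_leq_row K.
move: h; lia.
Qed.
End Lie.

Section Poly.
Variables (F : fieldType) (n : nat).

Lemma evp_dX (N : nat) (j k : 'I_N) (x : 'rV[F]_N) :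
  evp (mderiv j 'X_k) x = (k == j)%:R.
Proof.
rewrite /evp mderivX mevalZ mnm1E; case: eqVneq => [->|_]; last by rewrite mul0r.
rewrite mevalX big1 ?mulr1 // => i _; by rewrite mnmBE subnn expr0.
Qed.

Lemma row_diag (x : 'rV[F]_n) j : row_mx x x 0 j = x 0 (diag_index j).
Proof. by rewrite mxE /diag_index; case: split. Qed.

Lemma evp_pull (Q : {mpoly F[n + n]}) x :
  evp (pull_diag Q) x = evp Q (row_mx x x).
Proof.
rewrite /evp /pull_diag comp_mpoly_meval; apply: meval_eq => j.
by rewrite tnth_mktuple mevalXU row_diag.
Qed.

Lemma pull_X (k : 'I_(n + n)) : pull_diag 'X_k = 'X_(diag_index k) :> {mpoly F[n]}.
Proof. by rewrite /pull_diag comp_mpolyXU -tnth_nth tnth_mktuple. Qed.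

Definition chainP (j : 'I_n) (Q : {mpoly F[n + n]}) := forall x,
  evp (mderiv j (pull_diag Q)) x =
  evp (mderiv (lshift n j) Q) (row_mx x x) + evp (mderiv (rshift n j) Q) (row_mx x x).

Lemma chainD j p q : chainP j p -> chainP j q -> chainP j (p + q).
Proof.
move=> hp hq x; rewrite /pull_diag raddfD /= !mderivD /evp !mevalD.
have := hp x; have := hq x; rewrite /evp /pull_diag => -> ->; ring.
Qed.
Lemma chainZ j c p : chainP j p -> chainP j (c *: p).
Proof.
move=> hp x; rewrite /pull_diag comp_mpolyZ !mderivZ /evp !mevalZ.
have := hp x; rewrite /evp /pull_diag => ->; ring.
Qed.
Lemma chainM j p q : chainP j p -> chainP j q -> chainP j (p * q).
Proof.
move=> hp hq x; rewrite /pull_diag rmorphM /= !mderivM /evp !mevalD !mevalM.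
have := hp x; have := hq x; have := evp_pull p x; have := evp_pull q x.
rewrite /evp /pull_diag => -> -> -> ->; ring.
Qed.
Lemma chainX j k : chainP j 'X_k.
Proof.
move=> x; rewrite pull_X !evp_dX /diag_index.
case: (split_ordP k) => a ->;
  rewrite ?eq_lshift ?eq_rshift ?eq_lrshift ?eq_rlshift ?add0r ?addr0 //.
Qed.
Lemma chain1 j : chainP j 1.
Proof.
move=> x; rewrite /pull_diag rmorph1 -mpolyC1 !mderivC /evp !meval0; ring.
Qed.
Lemma chain_all j Q : chainP j Q.
Proof.
elim/mpolyind: Q => [|c m p _ _ hp].
  by move=> x; rewrite /pull_diag raddf0 !mderiv0 /evp !meval0 addr0.
apply: chainD => //; apply: chainZ.
rewrite mpolyXE_id; apply: (big_ind (chainP j)); [exact: chain1| exact: chainM|].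
move=> i _; elim: (m i) => [|e ihe]; first by rewrite expr0; exact: chain1.
by rewrite exprS; apply: chainM => //; exact: chainX.
Qed.
End Poly.

Section Hom.
Variables (F : numFieldType) (n : nat).

Lemma evp_homog (d : nat) (P : {mpoly F[n]}) (c : F) (x : 'rV[F]_n) :
  P \is d.-homog -> evp P (c *: x) = c ^+ d * evp P x.
Proof.
move=> hP; rewrite /evp !mevalE mulr_sumr; apply: eq_big_seq => mm hm.
under eq_bigr => i _ do rewrite mxE exprMn.
rewrite big_split /= prodrXr -mdegE (dhomog_mf hP hm); ring.
Qed.

Lemma poly_van (N : nat) (E : nat -> F) :
  (forall lam : F, \sum_(k < N) E k * lam ^+ k = 0) -> forall k, (k < N)%N -> E k = 0.
Proof.
move=> h k hk.
have p0 : \poly_(i < N) E i = 0.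
  apply: (@roots_geq_poly_eq0 _ _ [seq i%:R | i <- iota 0 N]).
  - by apply/allP => r /mapP [i _ ->]; rewrite /root horner_poly h.
  - by rewrite map_inj_uniq ?iota_uniq // => a b /eqP; rewrite eqr_nat => /eqP.
  - by rewrite size_map size_iota size_poly.
by have := congr1 (fun p : {poly F} => p`_k) p0; rewrite coef_poly hk coef0.
Qed.

Lemma fam_lemma (d : nat) (P : {mpoly F[n]}) (Fm : nat -> F) (x : 'rV[F]_n) :
  P \is d.-homog ->
  (forall lam : F, evp P (lam *: x - x) = \sum_(k < d.+1) (-1) ^+ (d - k) * lam ^+ k * Fm k) ->
  forall k, (k <= d)%N -> Fm k = ('C(d, k))%:R * evp P x.
Proof.
move=> hP hF k hk.
suff hv : forall lam, \sum_(k < d.+1)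
    ((fun k => (-1) ^+ (d - k) * (Fm k - ('C(d, k))%:R * evp P x)) k) * lam ^+ k = 0.
  have := @poly_van d.+1 (fun k => (-1) ^+ (d - k) * (Fm k - ('C(d, k))%:R * evp P x)) hv k hk; move/eqP; rewrite mulf_eq0 signr_eq0 /= subr_eq0.
  by move/eqP.
move=> lam /=.
have e1 : lam *: x - x = (lam - 1) *: x by rewrite scalerBl scale1r.
have := hF lam; rewrite e1 (evp_homog _ _ hP) addrC exprDn => h.
under eq_bigr => i _ do rewrite mulrBr mulrBl.
rewrite sumrB.
have -> : \sum_(i < d.+1) (-1) ^+ (d - i) * Fm i * lam ^+ i =
          \sum_(k < d.+1) (-1) ^+ (d - k) * lam ^+ k * Fm k.
  by apply: eq_bigr => i _; ring.
rewrite -h mulr_suml; apply/eqP; rewrite subr_eq0; apply/eqP; apply: eq_bigr => i _.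
rewrite -mulrnAl -mulr_natr; ring.
Qed.
End Hom.

Lemma zid (V : zmodType) (a b c d e f : V) :
 (a + b) + (c + d) - ((e + d) + (f + b)) = (a - e) + (c - f).
Proof.
rewrite !opprD !addrA (addrAC _ (-e)) (addrK d) (addrAC _ (-f)) (addrAC _ (-e)).
by rewrite (addrAC (a + b) c) (addrK b) (addrAC a c).
Qed.

Section Grad.
Variables (F : fieldType) (n : nat) (br : 'rV[F]_n -> 'rV[F]_n -> 'rV[F]_n).
Hypothesis hL : lie_bracket br.
Variable Pp : 'M[F]_n.
Local Notation K := (gram (killing br)).
Local Notation K' := (invmx (gram (killing br))).

Lemma lsub_delta (i : 'I_n) : lsubmx (delta_mx 0 (lshift n i) : 'rV[F]_(n + n)) = delta_mx 0 i.
Proof. by apply/rowP => k; rewrite !mxE eq_lshift. Qed.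
Lemma rsub_delta_l (i : 'I_n) : rsubmx (delta_mx 0 (lshift n i) : 'rV[F]_(n + n)) = 0.
Proof. by apply/rowP => k; rewrite !mxE eq_rlshift andbF. Qed.
Lemma rsub_delta (i : 'I_n) : rsubmx (delta_mx 0 (rshift n i) : 'rV[F]_(n + n)) = delta_mx 0 i.
Proof. by apply/rowP => k; rewrite !mxE eq_rshift. Qed.
Lemma lsub_delta_r (i : 'I_n) : lsubmx (delta_mx 0 (rshift n i) : 'rV[F]_(n + n)) = 0.
Proof. by apply/rowP => k; rewrite !mxE eq_lrshift andbF. Qed.

Lemma gram_form2 : gram (form2 br) = block_mx K 0 0 (-K).
Proof.
apply/matrixP => i j; rewrite mxE /form2.
case: (split_ordP i) => a ->; case: (split_ordP j) => b ->;
rewrite ?block_mxEul ?block_mxEur ?block_mxEdl ?block_mxEdr ?mxE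
  ?lsub_delta ?rsub_delta ?lsub_delta_r ?rsub_delta_l
  ?(bl0 (killing_lin hL)) ?(br0 (killing_lin hL) (killing_sym br)) ?subr0 ?sub0r //.
Qed.

Lemma inv_form2 : invmx (gram (form2 br)) = block_mx K' 0 0 (- K').
Proof.
rewrite gram_form2 -scaleN1r.
have hu : (-1 : F) \is a GRing.unit by rewrite unitrN1.
case: (boolP (K \in unitmx)) => hK.
  rewrite invmx_block_diag; last by rewrite block_diag_mx_unit unitmxZ // hK.
  by rewrite invmxZ ?unitmxZ // invrN1 scaleN1r.
rewrite !invmx_out //=; first by rewrite scaleN1r.
by rewrite inE block_diag_mx_unit (negbTE hK).
Qed.

Lemma grad_form2 (Q : {mpoly F[n + n]}) u :
  grad (form2 br) Q u = row_mx (lsubmx (dif Q u) *m K') (- (rsubmx (dif Q u) *m K')).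
Proof.
by rewrite /grad inv_form2 -{1}(hsubmxK (dif Q u)) mul_row_block !mulmx0 addr0 add0r mulmxN.
Qed.

Definition dd (g : 'rV[F]_(n + n)) := lsubmx g - rsubmx g.

Lemma dd_grad (Q : {mpoly F[n + n]}) u :
  dd (grad (form2 br) Q u) = (lsubmx (dif Q u) + rsubmx (dif Q u)) *m K'.
Proof. by rewrite /dd grad_form2 row_mxKl row_mxKr opprK mulmxDl. Qed.

Lemma calR_formula x gP gQ :
  form2 br (row_mx x x) (br2 br (calR Pp gP) gQ + br2 br gP (calR Pp gQ)) =
  killing br x (br (Rop Pp (dd gP)) (dd gQ) + br (dd gP) (Rop Pp (dd gQ))).
Proof.
rewrite /form2 /br2 /calR /dd !row_mxKl !row_mxKr add_row_mx row_mxKl row_mxKr.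
rewrite -(brN (killing_lin hL) (killing_sym br)) -(brD (killing_lin hL) (killing_sym br)).
congr (killing br x _).
move: (Rop Pp (lsubmx gP - rsubmx gP)) (Rop Pp (lsubmx gQ - rsubmx gQ)) => r1 r2.
move: (lsubmx gP) (rsubmx gP) (lsubmx gQ) (rsubmx gQ) => p1 p2 q1 q2.
rewrite !(brDl hL) !(brDr hL) !(brNl hL) !(brNr hL).
exact: zid.
Qed.

Lemma dif_pull (Q : {mpoly F[n + n]}) x :
  dif (pull_diag Q) x = lsubmx (dif Q (row_mx x x)) + rsubmx (dif Q (row_mx x x)).
Proof. by apply/rowP => j; rewrite !mxE chain_all. Qed.

Lemma grad_pull (Q : {mpoly F[n + n]}) x :
  grad (killing br) (pull_diag Q) x = dd (grad (form2 br) Q (row_mx x x)).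
Proof. by rewrite dd_grad /grad dif_pull. Qed.

Lemma poisson_eq (Q1 Q2 : {mpoly F[n + n]}) x :
  R_bracket br Pp (pull_diag Q1) (pull_diag Q2) x = calR_bracket br Pp Q1 Q2 (row_mx x x).
Proof. by rewrite /R_bracket /calR_bracket /= calR_formula !grad_pull. Qed.

Lemma dif_X (N : nat) (k : 'I_N) (u : 'rV[F]_N) : dif 'X_k u = delta_mx 0 k.
Proof. by apply/rowP => i; rewrite !mxE evp_dX eq_sym. Qed.

Definition Lf x S c := 2%:R^-1 * killing br x (br (Rop Pp c) S + br c (Rop Pp S)).

Lemma ham_l (Q : {mpoly F[n + n]}) x j :
  lsubmx (ham (calR_bracket br Pp) Q (row_mx x x)) 0 j =
  Lf x (dd (grad (form2 br) Q (row_mx x x))) (delta_mx 0 j *m K').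
Proof.
rewrite mxE mxE /calR_bracket /= calR_formula dd_grad dif_X lsub_delta rsub_delta_l addr0.
done.
Qed.
Lemma ham_r (Q : {mpoly F[n + n]}) x j :
  rsubmx (ham (calR_bracket br Pp) Q (row_mx x x)) 0 j =
  Lf x (dd (grad (form2 br) Q (row_mx x x))) (delta_mx 0 j *m K').
Proof.
rewrite mxE mxE /calR_bracket /= calR_formula dd_grad dif_X rsub_delta lsub_delta_r add0r.
done.
Qed.
End Grad.

Section Span.
Variables (F : fieldType) (n : nat).
Implicit Types (P Q : 'rV[F]_n -> Prop).

Lemma in_span_ind P (G : 'rV[F]_n -> Prop) x :
  G 0 -> (forall a b, G a -> G b -> G (a + b)) -> (forall v, P v -> G v) ->
  in_span P x -> G x.
Proof.
move=> h0 hD hP [m [xs [hx ->]]]; apply: big_ind => // i _; exact: hP.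
Qed.
Lemma in_span0 P : in_span P 0.
Proof. by exists 0%N, (fun _ => 0); split; [case | rewrite big_ord0]. Qed.
Lemma in_spanD P a b : in_span P a -> in_span P b -> in_span P (a + b).
Proof.
move=> [m1 [xs1 [h1 ->]]] [m2 [xs2 [h2 ->]]].
exists (m1 + m2)%N, (fun k => match split k with inl i => xs1 i | inr j => xs2 j end).
split; first by move=> k; case: split.
rewrite big_split_ord /=; congr (_ + _); apply: eq_bigr => i _.
  by have := unsplitK (inl i : 'I_m1 + 'I_m2) => /= ->.
by have := unsplitK (inr i : 'I_m1 + 'I_m2) => /= ->.
Qed.
Lemma in_span1 P v : P v -> in_span P v.
Proof. by move=> hv; exists 1%N, (fun _ => v); split => //; rewrite big_ord1. Qed.
Lemma in_span_bind P Q (f : 'rV[F]_n -> 'rV[F]_n) x :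
  f 0 = 0 -> (forall a b, f (a + b) = f a + f b) ->
  (forall v, P v -> in_span Q (f v)) -> in_span P x -> in_span Q (f x).
Proof.
move=> f0 fD hP; apply: (@in_span_ind P (fun y => in_span Q (f y))).
- by rewrite f0; exact: in_span0.
- by move=> a b ha hb; rewrite fD; exact: in_spanD.
- exact: hP.
Qed.
Lemma in_span_mono P Q x : (forall v, P v -> Q v) -> in_span P x -> in_span Q x.
Proof.
move=> h hx; have := @in_span_bind P Q id x erefl (fun _ _ => erefl) _ hx; apply.
by move=> v hv; apply: in_span1; exact: h.
Qed.
Lemma in_span_sub P (H : 'M[F]_n) (f : 'rV[F]_n -> 'rV[F]_n) x :
  f 0 = 0 -> (forall a b, f (a + b) = f a + f b) ->
  (forall v, P v -> (f v <= H)%MS) -> in_span P x -> (f x <= H)%MS.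
Proof.
move=> f0 fD hP; apply: (@in_span_ind P (fun y => (f y <= H)%MS)).
- by rewrite f0 sub0mx.
- by move=> a b ha hb; rewrite fD addmx_sub.
- exact: hP.
Qed.
Lemma in_span_scal P (g : 'rV[F]_n -> F) x :
  g 0 = 0 -> (forall a b, g (a + b) = g a + g b) ->
  (forall v, P v -> g v = 0) -> in_span P x -> g x = 0.
Proof.
move=> g0 gD hP; apply: (@in_span_ind P (fun y => g y = 0)) => //.
by move=> a b ha hb; rewrite gD ha hb addr0.
Qed.
End Span.

Section Roots.
Variables (F : numFieldType) (n l : nat) (br : 'rV[F]_n -> 'rV[F]_n -> 'rV[F]_n).
Variables (H : 'M[F]_n) (alpha : 'I_l -> 'cV[F]_n).
Hypothesis hL : lie_bracket br.
Hypothesis hC : cartan_subalgebra br H.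
Hypothesis hR : simple_roots br H alpha.

Lemma fvD (a b : 'cV[F]_n) (y : 'rV[F]_n) : fv (a + b) y = fv a y + fv b y.
Proof. by rewrite /fv mulmxDr mxE. Qed.
Lemma fvB (a b : 'cV[F]_n) (y : 'rV[F]_n) : fv (a - b) y = fv a y - fv b y.
Proof. by rewrite /fv mulmxBr !mxE. Qed.
Lemma int_combD (c c' : 'I_l -> int) :
  int_comb alpha (fun i => c i + c' i) = int_comb alpha c + int_comb alpha c'.
Proof. by rewrite /int_comb -big_split; apply: eq_bigr => i _; rewrite intrD scalerDl. Qed.
Lemma int_combB (c c' : 'I_l -> int) :
  int_comb alpha (fun i => c i - c' i) = int_comb alpha c - int_comb alpha c'.
Proof. by rewrite /int_comb -sumrB; apply: eq_bigr => i _; rewrite intrB scalerBl. Qed.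
Lemma int_comb0 : int_comb alpha (fun _ => 0) = 0.
Proof. by rewrite /int_comb big1 // => i _; rewrite scale0r. Qed.

Lemma rootvecZ a x s : rootvec br H a x -> rootvec br H a (s *: x).
Proof. by move=> h y hy; rewrite (brZr hL) h // !scalerA mulrC. Qed.
Lemma rootvec_br a b x z : rootvec br H a x -> rootvec br H b z ->
  rootvec br H (a + b) (br x z).
Proof.
move=> ha hb y hy; have := jacobi' hL y x z.
move/eqP; rewrite eq_sym subr_eq => /eqP ->.
by rewrite (hb y hy) (ha y hy) (brZl hL) (brZr hL) fvD scalerDl.
Qed.
Lemma indep (c : 'I_l -> int) :
  (forall y, (y <= H)%MS -> fv (int_comb alpha c) y = 0) -> forall i, c i = 0.
Proof.
case: hR => _ h2 _ hc i; have := h2 (fun i => (c i)%:~R) hc i.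
by move/eqP; rewrite intr_eq0 => /eqP.
Qed.

Lemma sum0_sign (c : 'I_l -> int) :
  ((forall i, 0 <= c i) \/ (forall i, c i <= 0)) -> \sum_(i < l) c i = 0 ->
  forall i, c i = 0.
Proof.
move=> [hp|hn] hs i.
  by apply: (@psumr_eq0P _ _ predT c) => // j _.
have hs' : \sum_(i < l) - c i = 0 by rewrite sumrN hs oppr0.
have hp : forall j, predT j -> 0 <= - c j by move=> j _; rewrite oppr_ge0.
have := (@psumr_eq0P _ _ predT (fun i => - c i)) hp hs' i isT.
by move=> /= /eqP; rewrite oppr_eq0 => /eqP.
Qed.

Lemma fv0 y : fv (0 : 'cV[F]_n) y = 0.
Proof. by rewrite /fv mulmx0 mxE. Qed.

Lemma brr_H (c c' : 'I_l -> int) r r' :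
  rootvec br H (int_comb alpha c) r -> rootvec br H (int_comb alpha c') r' ->
  \sum_i (c i + c' i) = 0 -> (br r r' <= H)%MS.
Proof.
move=> hr hr' hs.
have hz : rootvec br H (int_comb alpha (fun i => c i + c' i)) (br r r').
  by rewrite int_combD; exact: rootvec_br.
set g := int_comb alpha (fun i => c i + c' i) in hz.
case: (pselect (forall y, (y <= H)%MS -> fv g y = 0)) => hg.
  case: hC => _ _ hsn; apply: hsn => y hy.
  by rewrite (brA hL) (hz y hy) (hg y hy) scale0r oppr0 sub0mx.
case: (eqVneq (br r r') 0) => [->|hz0]; first by rewrite sub0mx.
exfalso.
case: hR => _ _ h3.
have hroot : is_root br H g.
  split; last by exists (br r r').
  have := hg; move/existsNP => [y /not_implyP [hy hn]].
  by exists y => //; apply/eqP.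
have [c'' [hsign heq]] := h3 g hroot.
have hc : forall i, c i + c' i - c'' i = 0.
  apply: indep => y hy.
  by rewrite (int_combB (fun i => c i + c' i) c'') fvB -/g heq // subrr.
have h0 : forall i, c'' i = 0.
  apply: sum0_sign => //; rewrite -[RHS]hs; apply: eq_bigr => i _.
  by have := hc i; move/eqP; rewrite subr_eq0 => /eqP.
apply: hg => y hy; rewrite heq //.
have -> : c'' = (fun _ => 0) by apply: funext => i; exact: h0.
by rewrite int_comb0 fv0.
Qed.

Local Notation kl := (killing_lin hL).
Local Notation ks := (killing_sym br).

Lemma orth_rr (c c' : 'I_l -> int) r r' :
  rootvec br H (int_comb alpha c) r -> rootvec br H (int_comb alpha c') r' ->
  \sum_i (c i + c' i) != 0 -> killing br r r' = 0.
Proof.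
move=> hr hr' hs; apply/eqP; apply: contraNT hs => hk.
have hz : forall i, c i + c' i = 0.
  apply: indep => y hy; rewrite int_combD fvD.
  have e : killing br (br y r) r' = - killing br r (br y r').
    by rewrite (brA hL) (blN kl) (killing_inv hL).
  rewrite (hr y hy) (hr' y hy) (blZ kl) (brZ kl ks) in e.
  have : (fv (int_comb alpha c) y + fv (int_comb alpha c') y) * killing br r r' = 0.
    by rewrite mulrDl e addNr.
  by move/eqP; rewrite mulf_eq0 (negbTE hk) orbF => /eqP.
by apply/eqP; rewrite big1.
Qed.

Lemma orth_hr (c : 'I_l -> int) a r :
  (a <= H)%MS -> rootvec br H (int_comb alpha c) r -> \sum_i c i != 0 ->
  killing br a r = 0.
Proof.
case: hC => _ [N hN] _ ha hr hs; apply/eqP; apply: contraNT hs => hk.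
have hz : forall i, c i = 0.
  apply: indep => y hy.
  have e : forall m, killing br (lbr br a (nseq m y)) r =
                     (- fv (int_comb alpha c) y) ^+ m * killing br a r.
    elim => [|m IH] /=; first by rewrite expr0 mul1r.
    rewrite (brA hL) (blN kl) (killing_inv hL) (hr y hy) (brZ kl ks) IH exprS; ring.
  have h0 := hN a (nseq N y) ha.
  rewrite all_nseq hy orbT size_nseq in h0.
  have := e N; rewrite h0 // (bl0 kl).
  move/eqP; rewrite eq_sym mulf_eq0 (negbTE hk) orbF expf_eq0 oppr_eq0.
  by move=> /andP [_ /eqP].
by apply/eqP; rewrite big1.
Qed.

Local Notation gr := (grade br H alpha).

Lemma gr_br i j a b : gr i a -> gr j b -> gr (i + j) (br a b).
Proof.
case=> [[-> ha]|[hi hsa]]; case=> [[-> hb]|[hj hsb]].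
- left; split; first by rewrite addr0.
  by case: hC => hs _ _; exact: hs.
- right; rewrite add0r; split => //.
  apply: (in_span_bind (br0r hL a) (fun u v => brDr hL u v a) _ hsb).
  move=> v [c [hc hv]]; apply: in_span1; exists c; split => //.
  rewrite (hv a ha); exact: rootvecZ.
- right; rewrite addr0; split => //.
  apply: (in_span_bind (br0l hL b) (fun u v => brDl hL u v b) _ hsa).
  move=> v [c [hc hv]]; apply: in_span1; exists c; split => //.
  rewrite (brA hL) (hv b hb) -scaleNr; exact: rootvecZ.
case: (eqVneq (i + j) 0) => hij.
  left; split => //.
  apply: (in_span_sub (br0l hL b) (fun u v => brDl hL u v b) _ hsa).
  move=> v [c [hc hv]].
  apply: (in_span_sub (br0r hL v) (fun u w => brDr hL u w v) _ hsb).
  move=> w [c' [hc' hw]].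
  by apply: (brr_H hv hw); rewrite big_split /= hc hc'.
right; split; first by apply/eqP.
apply: (in_span_bind (br0l hL b) (fun u v => brDl hL u v b) _ hsa).
move=> v [c [hc hv]].
apply: (in_span_bind (br0r hL v) (fun u w => brDr hL u w v) _ hsb).
move=> w [c' [hc' hw]]; apply: in_span1.
exists (fun k => c k + c' k); split; first by rewrite big_split /= hc hc'.
by rewrite int_combD; exact: rootvec_br.
Qed.

Lemma gr_orth i j a b : gr i a -> gr j b -> i + j != 0 -> killing br a b = 0.
Proof.
case=> [[-> ha]|[hi hsa]]; case=> [[-> hb]|[hj hsb]] hij.
- by rewrite addr0 eqxx in hij.
- rewrite add0r in hij.
  apply: (in_span_scal (br0 kl ks a) (fun u v => brD kl ks u v a) _ hsb).
  by move=> v [c [hc hv]]; apply: (orth_hr ha hv); rewrite hc.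
- rewrite addr0 in hij.
  apply: (in_span_scal (bl0 kl b) (fun u v => blD kl u v b) _ hsa).
  by move=> v [c [hc hv]]; rewrite ks; apply: (orth_hr hb hv); rewrite hc.
apply: (in_span_scal (bl0 kl b) (fun u v => blD kl u v b) _ hsa).
move=> v [c [hc hv]].
apply: (in_span_scal (br0 kl ks v) (fun u w => brD kl ks u w v) _ hsb).
by move=> w [c' [hc' hw]]; apply: (orth_rr hv hw); rewrite big_split /= hc hc'.
Qed.

Definition span_deg (p : int -> bool) :=
  in_span (fun y => exists2 k, p k & gr k y).

Lemma span_deg1 (p : int -> bool) k v : p k -> gr k v -> span_deg p v.
Proof. by move=> hk hv; apply: in_span1; exists k. Qed.

Lemma split_pair a b :
  span_deg (fun k => 0 <= k) a -> span_deg (fun k => (-1 <= k) && (k <= 1)) b ->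
  exists w a2, br a b = w + a2 /\ span_deg (fun k => (k == -1) || (k == 0)) w /\
               span_deg (fun k => 1 <= k) a2.
Proof.
move=> ha hb.
pose G := fun a => exists w a2, br a b = w + a2 /\
   span_deg (fun k => (k == -1) || (k == 0)) w /\ span_deg (fun k => 1 <= k) a2.
apply: (@in_span_ind _ _ _ G _ _ _ _ ha).
- by exists 0, 0; rewrite (br0l hL) addr0; split => //; split; exact: in_span0.
- move=> u v [w1 [a1 [e1 [h1 h1']]]] [w2 [a2 [e2 [h2 h2']]]].
  exists (w1 + w2), (a1 + a2); rewrite (brDl hL) e1 e2 addrACA; split => //.
  by split; apply: in_spanD.
move=> v [k hk hv].
pose G' := fun b => exists w a2, br v b = w + a2 /\
   span_deg (fun k => (k == -1) || (k == 0)) w /\ span_deg (fun k => 1 <= k) a2.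
apply: (@in_span_ind _ _ _ G' _ _ _ _ hb).
- by exists 0, 0; rewrite (br0r hL) addr0; split => //; split; exact: in_span0.
- move=> u u' [w1 [a1 [e1 [h1 h1']]]] [w2 [a2 [e2 [h2 h2']]]].
  exists (w1 + w2), (a1 + a2); rewrite (brDr hL) e1 e2 addrACA; split => //.
  by split; apply: in_spanD.
move=> u [k' hk' hu].
have hg := gr_br hv hu.
case: (boolP (k + k' <= 0)) => hkk.
  exists (br v u), 0; rewrite addr0; split => //; split; last exact: in_span0.
  apply: (span_deg1 _ hg); move: hk hk' hkk; lia.
exists 0, (br v u); rewrite add0r; split => //; split; first exact: in_span0.
apply: (span_deg1 _ hg); move: hkk; lia.
Qed.

Lemma span_br (p q r : int -> bool) a b :
  (forall i j, p i -> q j -> r (i + j)) ->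
  span_deg p a -> span_deg q b -> span_deg r (br a b).
Proof.
move=> hpq ha hb.
apply: (in_span_bind (br0l hL b) (fun u v => brDl hL u v b) _ ha).
move=> v [k hk hv].
apply: (in_span_bind (br0r hL v) (fun u w => brDr hL u w v) _ hb).
move=> w [k' hk' hw]; apply: (span_deg1 _ (gr_br hv hw)); exact: hpq.
Qed.

Lemma span_orth (p q : int -> bool) a b :
  (forall i j, p i -> q j -> i + j != 0) ->
  span_deg p a -> span_deg q b -> killing br a b = 0.
Proof.
move=> hpq ha hb.
apply: (in_span_scal (bl0 kl b) (fun u v => blD kl u v b) _ ha).
move=> v [k hk hv].
apply: (in_span_scal (br0 kl ks v) (fun u w => brD kl ks u w v) _ hb).
move=> w [k' hk' hw]; apply: (gr_orth hv hw); exact: hpq.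
Qed.

Lemma int_comb_delta i : int_comb alpha (fun j => (j == i)%:Z) = alpha i.
Proof.
rewrite /int_comb (bigD1 i) //= eqxx scale1r big1 ?addr0 // => j hj.
by rewrite (negbTE hj) scale0r.
Qed.

Lemma gr_es (es : 'I_l -> 'rV[F]_n) i : rootvec br H (alpha i) (es i) -> gr 1 (es i).
Proof.
move=> h; right; split => //; apply: in_span1; exists (fun j => (j == i)%:Z).
split; last by rewrite int_comb_delta.
by rewrite (bigD1 i) //= eqxx big1 ?addr0 // => j hj; rewrite (negbTE hj).
Qed.

Variable Pp : 'M[F]_n.
Hypothesis hPp : is_proj_plus br H alpha Pp.

Lemma Lf_w (es : 'I_l -> 'rV[F]_n) x S :
  (forall i, rootvec br H (alpha i) (es i)) ->
  span_deg (fun k => (k == -1) || (k == 0)) (x - \sum_(i < l) es i) ->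
  exists w, span_deg (fun k => (k == -1) || (k == 0)) w /\
    forall c, Lf br Pp x S c = killing br w c.
Proof.
move=> hes hx.
set e := \sum_(i < l) es i in hx.
have hxs : span_deg (fun k => (-1 <= k) && (k <= 1)) x.
  rewrite -(subrK e x); apply: in_spanD.
    by apply: (in_span_mono _ hx) => v [k hk hv]; exists k => //; move: hk; lia.
  rewrite /e; apply: (big_ind (span_deg (fun k => (-1 <= k) && (k <= 1)))).
  - exact: in_span0.
  - by move=> u v; apply: in_spanD.
  by move=> i _; apply: (span_deg1 _ (gr_es (hes i))).
have [hSp hSm] := hPp S.
have [w [a2 [eA [hw ha2]]]] := split_pair hSp hxs.
have hB : span_deg (fun k => k <= 0) (br (S - S *m Pp) x).
  by apply: (span_br _ hSm hxs) => i j; lia.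
exists w; split => // c.
have [hcp hcm] := hPp c.
set Sp := S *m Pp in eA hSp hSm hB; set cp := c *m Pp in hcp hcm.
set B := br (S - Sp) x in hB.
have z1 : killing br cp a2 = 0 by apply: (span_orth _ hcp ha2) => i j; lia.
have z2 : killing br (c - cp) B = 0 by apply: (span_orth _ hcm hB) => i j; lia.
have z3 : killing br (c - cp) w = 0 by apply: (span_orth _ hcm hw) => i j; lia.
rewrite /Lf /Rop -/Sp -/cp (brD kl ks).
have i1 : forall u v, killing br x (br u v) = killing br u (br v x).
  by move=> u v; rewrite -[RHS](killing_inv hL) ks.
rewrite !i1.
have eS : br S x = (w + a2) + B by rewrite -eA -(brDl hL) addrC subrK.
have eR : br (Sp - (S - Sp)) x = (w + a2) - B by rewrite (brBl hL) eA.
rewrite eS eR.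
have ec : c = cp + (c - cp) by rewrite addrC subrK.
rewrite {3}ec [killing br w _]ks.
rewrite !(blD kl) !(blN kl) !(brD kl ks) !(brN kl ks).
have d : forall X, killing br c X = killing br cp X + killing br (c - cp) X.
  by move=> X; rewrite -(blD kl) addrC subrK.
rewrite !d z1 z2 z3.
have h2 : (2%:R : F) != 0 by rewrite pnatr_eq0.
by field.
Qed.
End Roots.

Lemma mul_trdelta (F : fieldType) (n : nat) (w : 'rV[F]_n) j :
  (w *m (delta_mx 0 j : 'rV[F]_n)^T) 0 0 = w 0 j.
Proof.
rewrite trmx_delta mxE (bigD1 j) //= mxE !eqxx mulr1 big1 ?addr0 // => k hk.
by rewrite mxE (negbTE hk) mulr0.
Qed.

Unset Implicit Arguments.
Theorem theorem3p16
  (R : realType) (n l : nat)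
  (br : 'rV[R[i]]_n -> 'rV[R[i]]_n -> 'rV[R[i]]_n)
  (H : 'M[R[i]]_n) (alpha : 'I_l -> 'cV[R[i]]_n) (es : 'I_l -> 'rV[R[i]]_n)
  (Pp : 'M[R[i]]_n)
  (P : 'I_l -> {mpoly R[i][n]}) (m : 'I_l -> nat)
  (Fam : 'I_l -> nat -> 'rV[R[i]]_n -> 'rV[R[i]]_n -> R[i]) :
  lie_bracket br ->
  lie_simple br ->
  cartan_subalgebra br H ->
  \rank H = l ->
  simple_roots br H alpha ->
  (forall i, es i != 0 /\ rootvec br H (alpha i) (es i)) ->
  is_proj_plus br H alpha Pp ->
  invariant_generators br P m ->
  (forall (i : 'I_l) (lam : R[i]) (x y : 'rV[R[i]]_n),
     evp (P i) (lam *: x - y) =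
     \sum_(k < (m i).+2) (-1) ^+ ((m i).+1 - k) * lam ^+ k * Fam i k x y) ->
  let e := \sum_(i < l) es i in
  let Tdir := grade_sum br H alpha (fun k => (k == -1) || (k == 0)) in
  let inT := fun x => Tdir (x - e) in
  let inT2 := fun u : 'rV[R[i]]_(n + n) =>
                lsubmx u = rsubmx u /\ Tdir (lsubmx u - e) in
  (* (1) T'' = (e,e) + Delta(g_{-1} + g_0) is a Poisson submanifold *)
  poisson_submanifold (calR_bracket br Pp) (row_mx e e)
        (fun w => lsubmx w = rsubmx w /\ Tdir (lsubmx w)) /\
  [/\
      (* (2) phi(x) = (x,x) is a bijection T -> T'' ... *)
      (forall x, inT x -> inT2 (row_mx x x)),
      (forall x y, inT x -> inT y -> row_mx x x = row_mx y y -> x = y),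
      (forall u, inT2 u -> exists2 x, inT x & u = row_mx x x),
      (* ... which is Poisson: {F o phi, G o phi}_R = {F, G}_calR o phi on T *)
      (forall (Q1 Q2 : {mpoly R[i][n + n]}) x, inT x ->
         R_bracket br Pp (pull_diag Q1) (pull_diag Q2) x
         = calR_bracket br Pp Q1 Q2 (row_mx x x)) &
      (* and F_{k,i}(phi x) = binom(m_i+1, k) P_i(x) *)
      (forall (i : 'I_l) (k : nat) x, (k <= (m i).+1)%N -> inT x ->
         Fam i k x x = ('C((m i).+1, k))%:R * evp (P i) x)].
Proof.
move=> hL hS hC _ hR hes hPp hinv hFam e Tdir inT inT2.
have hes' : forall i, rootvec br H (alpha i) (es i) by move=> i; case: (hes i).
split.
  move=> Q u [].
  rewrite -(hsubmxK u); set x := lsubmx u; set y := rsubmx u.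
  rewrite opp_row_mx add_row_mx !row_mxKl !row_mxKr => hxy hT.
  have exy : x = y by rewrite -(subrK e x) hxy subrK.
  rewrite -exy in hxy *.
  have hlr : lsubmx (ham (calR_bracket br Pp) Q (row_mx x x)) =
             rsubmx (ham (calR_bracket br Pp) Q (row_mx x x)).
    by apply/rowP => j; rewrite (ham_l hL) (ham_r hL).
  split => //.
  case: (killing_dich hL hS) => hK.
    have [w [hw hwL]] := Lf_w hL hC hR hPp (dd (grad (form2 br) Q (row_mx x x))) hes' hT.
    have -> : lsubmx (ham (calR_bracket br Pp) Q (row_mx x x)) = w; last exact: hw.
    apply/rowP => j; rewrite (ham_l hL) hwL (kgram hL) trmx_mul trmx_inv (gram_tr (killing_sym br)).
    by rewrite mulmxA -(mulmxA w) (mulmxV hK) mulmx1 mul_trdelta.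
  have -> : lsubmx (ham (calR_bracket br Pp) Q (row_mx x x)) = 0; last exact: in_span0.
  by apply/rowP => j; rewrite (ham_l hL) /Lf (kgram hL) hK mulmx0 mul0mx !mxE mulr0.
split.
- by move=> x hx; rewrite /inT2 row_mxKl row_mxKr.
- by move=> x y _ _ /(congr1 lsubmx); rewrite !row_mxKl.
- move=> u [hlr hT]; exists (lsubmx u) => //.
  by rewrite -{1}(hsubmxK u) hlr.
- by move=> Q1 Q2 x _; exact: poisson_eq.
move=> i k x hk _; case: hinv => _ hhom _ _.
exact: (@fam_lemma _ _ _ (P i) (fun k => Fam i k x x) x (hhom i) (fun lam => hFam i lam x x) k hk).
Qed.
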